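(* Let $0<p<1$ and let $k\ge 1$ be an integer. A coin showing heads with probability $p$ and tails with probability $1-p$ is flipped independently until $k$ consecutive heads first appear; let $Y$ be the number of flips. Then \[ E(Y) = p^{-1}+p^{-2}+\cdots+p^{-k} = \frac{1-p^k}{(1-p)p^k},\qquad E(Y^2) = \frac{2(1-p^k)}{(1-p)^2 p^{2k}} - \frac{2k+1-p^k}{(1-p)p^k}, \] \[ E(Y^3) = \frac{6(1-p^k)}{(1-p)^3 p^{3k}} - \frac{12k+6-(6k+6)p^k}{(1-p)^2 p^{2k}} + \frac{3k^2+3k+1-p^k}{(1-p)p^k}, \] \[ E(Y^4) = \frac{24(1-p^k)}{(1-p)^4 p^{4k}} - \frac{72k+36-(48k+36)p^k}{(1-p)^3 p^{3k}} + \frac{48k^2+48k+14-(12k^2+24k+14)p^k}{(1-p)^2 p^{2k}} - \frac{4k^3+6k^2+4k+1-p^k}{(1-p) p^k}. \] *)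

(* Defs.v *)
From HB Require Import structures.
From mathcomp Require Import all_boot all_order all_algebra.
From mathcomp Require Import all_classical all_reals all_analysis.
Set Implicit Arguments. Unset Strict Implicit. Unset Printing Implicit Defensive.
Import Order.TTheory GRing.Theory Num.Theory.
Import numFieldNormedType.Exports.
Local Open Scope ring_scope.
Local Open Scope classical_set_scope.

(* A finite flip record: true = heads, false = tails. *)

Definition ends_with_run (k : nat) (s : seq bool) : bool :=
  (k <= size s)%N && all id (drop (size s - k) s).

(* [first_run_at k s]: k consecutive heads appear for the first time exactly
   at the last flip of s (i.e. the stopping time Y equals size s). *)
Definition first_run_at (k : nat) (s : seq bool) : bool :=
  ends_with_run k s &&
  [forall m : 'I_(size s), ~~ ends_with_run k (take m s)].

Definition flip_weight (R : pzRingType) (p : R) (s : seq bool) : R :=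
  \prod_(b <- s) (if b then p else 1 - p).

Definition probY (R : pzRingType) (p : R) (k n : nat) : R :=
  \sum_(s : n.-tuple bool | first_run_at k s) flip_weight p s.

Definition moment_is (R : realType) (p : R) (k j : nat) (v : R) : Prop :=
  (fun N : nat => \sum_(0 <= n < N) (n%:R) ^+ j * probY p k n) @ \oo --> v.

(* Main.v *)
Require Import Defs.
From HB Require Import structures.
From mathcomp Require Import all_boot all_order all_algebra.
From mathcomp Require Import all_classical all_reals all_analysis.
From mathcomp Require Import zify ring lra.
Import Order.TTheory GRing.Theory Num.Theory.
Import numFieldNormedType.Exports.
Local Open Scope ring_scope.
Local Open Scope classical_set_scope.

Definition allb n : seq (seq bool) := [seq val t | t : n.-tuple bool].

Lemma mem_allb n s : (s \in allb n) = (size s == n).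
Proof.
rewrite /allb /image_mem; apply/mapP/idP => [[t _ ->]|/eqP H]; first by rewrite size_tuple.
by exists (Tuple (introT eqP H)); rewrite ?mem_enum.
Qed.

Lemma uniq_allb n : uniq (allb n).
Proof. rewrite map_inj_uniq ?enum_uniq //; exact: val_inj. Qed.

Lemma allb_reindex (R : nmodType) n (l : seq (seq bool)) (F : seq bool -> R) :
  uniq l -> (forall s, (s \in l) = (size s == n)) ->
  \sum_(s <- allb n) F s = \sum_(s <- l) F s.
Proof.
move=> ul ml; apply: perm_big; apply: uniq_perm => //; first exact: uniq_allb.
by move=> s; rewrite mem_allb ml.
Qed.

Lemma allb_rcons (R : nmodType) n (F : seq bool -> R) :
  \sum_(s <- allb n.+1) F s =
  \sum_(t <- allb n) (F (rcons t true) + F (rcons t false)).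
Proof.
rewrite (@allb_reindex _ n.+1 [seq rcons t b | t <- allb n, b <- [:: true; false]]).
- rewrite big_allpairs_dep; apply: eq_bigr => t _.
  by rewrite big_cons big_seq1.
- apply: allpairs_uniq; [exact: uniq_allb | by [] |].
  by move=> [t1 b1] [t2 b2] _ _ /= /rcons_inj.
- move=> s; apply/allpairsP/idP => [[[t b] /= [ht _ ->]]|].
    by rewrite size_rcons; move: ht; rewrite mem_allb.
  case/lastP: s => [//|t b]; rewrite size_rcons eqSS => ht.
  by exists (t, b); rewrite /= mem_allb ht; case: b.
Qed.

Lemma allb_cat (R : nmodType) m j (F : seq bool -> R) :
  \sum_(s <- allb (m + j)%N) F s =
  \sum_(t <- allb m) \sum_(r <- allb j) F (t ++ r).
Proof.
rewrite (@allb_reindex _ (m + j)%N [seq t ++ r | t <- allb m, r <- allb j]).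
- by rewrite big_allpairs_dep.
- apply: allpairs_uniq; [exact: uniq_allb | exact: uniq_allb |].
  move=> [t1 r1] [t2 r2] /allpairsP[[x1 y1] /= [h1 _ [-> _]]]
     /allpairsP[[x2 y2] /= [h2 _ [-> _]]] /= /eqP.
  rewrite eqseq_cat; last by move: h1 h2; rewrite !mem_allb => /eqP -> /eqP ->.
  by case/andP => /eqP -> /eqP ->.
- move=> s; apply/allpairsP/idP => [[[t r] /= [ht hr ->]]|/eqP hs].
    by rewrite size_cat; move: ht hr; rewrite !mem_allb => /eqP -> /eqP ->.
  exists (take m s, drop m s); rewrite /= cat_take_drop !mem_allb size_take size_drop hs.
  rewrite addKn eqxx; split => //; case: ltnP => //= h; lia.
Qed.

Definition nr k (s : seq bool) :=
  all (fun m => ~~ ends_with_run k (take m s)) (iota 0 (size s).+1).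

Lemma fra_iota k s : first_run_at k s =
  ends_with_run k s && all (fun m => ~~ ends_with_run k (take m s)) (iota 0 (size s)).
Proof.
rewrite /first_run_at; congr andb; apply/forallP/allP => H.
  by move=> m; rewrite mem_iota add0n => hm; exact: (H (Ordinal hm)).
by move=> m; apply: H; rewrite mem_iota add0n ltn_ord.
Qed.

Lemma all_take_rcons k t b :
  all (fun m => ~~ ends_with_run k (take m (rcons t b))) (iota 0 (size t).+1) =
  nr k t.
Proof.
apply: eq_in_all => m; rewrite mem_iota add0n ltnS => hm.
by rewrite -cats1 takel_cat.
Qed.

Lemma nr_rcons k t b : nr k (rcons t b) = nr k t && ~~ ends_with_run k (rcons t b).
Proof.
rewrite {1}/nr size_rcons -addn1 iotaD all_cat add0n all_take_rcons /= andbT.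
by rewrite -(size_rcons t b) take_size.
Qed.

Lemma fra_rcons k t b : first_run_at k (rcons t b) = ends_with_run k (rcons t b) && nr k t.
Proof. by rewrite fra_iota size_rcons all_take_rcons. Qed.

Lemma nr_ewr k s : nr k s -> ~~ ends_with_run k s.
Proof.
rewrite /nr => /allP /(_ (size s)); rewrite take_size; apply.
by rewrite mem_iota add0n ltnSn.
Qed.

Lemma ewr_false k s j : (j < k)%N -> ends_with_run k (s ++ false :: nseq j true) = false.
Proof.
move=> hj; rewrite /ends_with_run size_cat /= size_nseq.
case: leqP => //= hk.
rewrite drop_cat; case: ltnP => h.
  by rewrite all_cat /= andbF.
have -> : (size s + j.+1 - k - size s = 0)%N by lia.
by rewrite drop0.
Qed.

Lemma ewr_true k s : ends_with_run k (s ++ nseq k true) = true.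
Proof.
rewrite /ends_with_run size_cat size_nseq leq_addl /= addnK drop_size_cat //.
by apply/allP => x /nseqP [->].
Qed.

Lemma nseqSr (T : Type) n (x : T) : nseq n.+1 x = rcons (nseq n x) x.
Proof. by elim: n => //= n <-. Qed.

Lemma nr_cat_false k t j : (j < k)%N -> nr k (t ++ false :: nseq j true) = nr k t.
Proof.
elim: j => [|j IH] hj.
  by rewrite /= cats1 nr_rcons -cats1 (@ewr_false k t _ hj) andbT.
by rewrite nseqSr -rcons_cons -rcons_cat nr_rcons IH 1?ltnW // rcons_cat rcons_cons
  -nseqSr (@ewr_false k t _ hj) andbT.
Qed.

Lemma fra_cat k t r : (0 < k)%N -> size r = k.+1 ->
  first_run_at k (t ++ r) = nr k t && (r == false :: nseq k true).
Proof.
move=> hk hr.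
case: r hr => [//|x r2] /= [hr2].
have [->|ne] := eqVneq r2 (nseq k true).
  case: k hk {hr2} => // k' _.
  rewrite [nseq k'.+1 true]nseqSr -rcons_cons -rcons_cat fra_rcons.
  case: x.
    rewrite [X in _ = _ && X]/= andbF.
    case H: (nr k'.+1 (t ++ true :: nseq k' true)); last by rewrite andbF.
    have := @nr_ewr _ _ H.
    by rewrite -[true :: nseq k' true]/(nseq k'.+1 true) ewr_true.
  rewrite nr_cat_false // rcons_cat rcons_cons -nseqSr -cat_rcons ewr_true.
  by rewrite /= eqxx andbT.
have -> : (x :: r2 == false :: nseq k true) = false.
  by apply/negbTE; apply: contra ne => /eqP [_ ->].
rewrite andbF fra_iota.
suff -> : ends_with_run k (t ++ x :: r2) = false by [].
rewrite -cat_rcons /ends_with_run size_cat size_rcons hr2 addnK leq_addl /=.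
rewrite drop_size_cat ?size_rcons //.
apply/negbTE; apply: contra ne => H.
rewrite -hr2; apply/eqP/all_pred1P; move: H; clear.
by elim: r2 => //= b s IH /andP [hb hs]; rewrite hb IH.
Qed.

Section Sums.
Variables (R : realType) (p : R) (k : nat).
Hypotheses (hp0 : 0 < p) (hp1 : p < 1) (hk : (0 < k)%N).

Definition uu n := \sum_(s <- allb n) (if nr k s then flip_weight p s else 0).

Lemma probY_allb n : probY p k n =
  \sum_(s <- allb n) (if first_run_at k s then flip_weight p s else 0).
Proof. by rewrite /probY big_mkcond /allb big_image. Qed.

Lemma fw_rcons t b : flip_weight p (rcons t b) = flip_weight p t * (if b then p else 1 - p).
Proof. by rewrite /flip_weight -cats1 big_cat big_seq1. Qed.

Lemma fw_cat t r : flip_weight p (t ++ r) = flip_weight p t * flip_weight p r.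
Proof. by rewrite /flip_weight big_cat. Qed.

Lemma fw_nseq n : flip_weight p (nseq n true) = p ^+ n.
Proof. by elim: n => [|n IH]; rewrite /flip_weight ?big_nil // big_cons -/(flip_weight p _) IH exprS. Qed.

Lemma fw_ge0 s : 0 <= flip_weight p s.
Proof. by apply: prodr_ge0 => b _; case: b; rewrite ?subr_ge0 ltW. Qed.

Lemma uu_ge0 n : 0 <= uu n.
Proof. by apply: sumr_ge0 => s _; case: ifP => // _; exact: fw_ge0. Qed.

Lemma uu0 : uu 0 = 1.
Proof.
rewrite /uu (@allb_reindex _ 0 [:: [::]]) // ?big_seq1.
  by rewrite /nr /= /ends_with_run leqNgt hk /= /flip_weight big_nil.
by move=> s; rewrite inE size_eq0.
Qed.

Lemma uuS n : uu n = uu n.+1 + probY p k n.+1.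
Proof.
rewrite probY_allb /uu -big_split /= allb_rcons; apply: eq_bigr => t _.
rewrite !nr_rcons !fra_rcons !fw_rcons.
case: (nr k t); case: (ends_with_run k _); case: (ends_with_run k _) => /=;
  rewrite ?addr0 ?add0r; ring.
Qed.

Lemma probY_lt n : (n < k)%N -> probY p k n = 0.
Proof.
move=> hn; rewrite probY_allb big_seq big1 // => s; rewrite mem_allb => /eqP hs.
by rewrite /first_run_at /ends_with_run hs leqNgt hn.
Qed.

Lemma probY_k : probY p k k = p ^+ k.
Proof.
rewrite probY_allb (eq_big_seq (fun s => if s == nseq k true then flip_weight p s else 0)).
  by rewrite -big_mkcond -big_filter filter_pred1_uniq ?uniq_allb ?mem_allb ?size_nseq //
     big_seq1 fw_nseq.
move=> s; rewrite mem_allb => /eqP hs.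
rewrite fra_iota.
have -> : all (fun m => ~~ ends_with_run k (take m s)) (iota 0 (size s)).
  apply/allP => m; rewrite mem_iota add0n => /andP [_ hm].
  by rewrite /ends_with_run size_take hm -hs leqNgt hm.
rewrite andbT /ends_with_run hs leqnn subnn drop0.
have -> : all id s = (s == nseq k true).
  apply/idP/eqP => [H|->]; last by apply/allP => x /nseqP [->].
  rewrite -hs; apply/all_pred1P; move: H; clear.
  by elim: s => //= b s IH /andP [hb hs]; rewrite hb IH.
by [].
Qed.

Lemma probY_tail m : probY p k (m + k)%N.+1 = (1 - p) * p ^+ k * uu m.
Proof.
rewrite probY_allb -addnS allb_cat /uu mulr_sumr; apply: eq_bigr => t _.
rewrite (eq_big_seq (fun r => if r == false :: nseq k true then
   (if nr k t then flip_weight p t else 0) * flip_weight p r else 0)).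
  rewrite -big_mkcond -big_filter filter_pred1_uniq ?uniq_allb ?mem_allb /= ?size_nseq //.
  rewrite big_seq1 -cat1s fw_cat fw_nseq /flip_weight big_seq1 /=.
  by case: (nr k t); rewrite ?mul0r ?mulr0 //= mulrC.
move=> r; rewrite mem_allb => /eqP hr.
rewrite fra_cat // fw_cat.
by case: (nr k t); case: (r == _); rewrite ?mul0r.
Qed.

End Sums.
Section An.
Variable R : realType.

Lemma my_bound (y : R) m : 0 <= y <= 1 -> m%:R * y ^+ m * (1 - y) <= 1 - y ^+ m.
Proof.
case/andP => y0 y1; elim: m => [|m IH]; first by rewrite !mul0r expr0 subrr.
have h0 : 0 <= y ^+ m by exact: exprn_ge0.
have h1 : y ^+ m <= 1 by exact: exprn_ile1.
rewrite exprS -natr1.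
set t := y ^+ m in h0 h1 IH *.
have e1 : y * (m%:R * t * (1 - y)) <= y * (1 - t) by rewrite ler_wpM2l.
have e2 : 0 <= (1 - y) * (1 - y * t).
  by rewrite mulr_ge0 // subr_ge0 // mulr_ile1.
nra.
Qed.

Lemma my_bound2 (y : R) m : 0 <= y < 1 -> m%:R * y ^+ m <= (1 - y)^-1.
Proof.
case/andP => y0 y1; have hy : 0 < 1 - y by rewrite subr_gt0.
rewrite -div1r ler_pdivlMr //.
have := @my_bound y m; rewrite y0 ltW //= => /(_ isT) H.
apply: le_trans H _; rewrite lerBlDr lerDl exprn_ge0 //.
Qed.

Lemma series_poly_geom (i : nat) (z : R) : 0 <= z < 1 ->
  cvgn (series (fun m : nat => m%:R ^+ i * z ^+ m)).
Proof.
elim: i z => [|i IH] z /andP [z0 z1].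
  have -> : (fun m : nat => m%:R ^+ 0 * z ^+ m) = geometric 1 z.
    by apply/funext => m; rewrite expr0.
  by apply: is_cvg_geometric_series; rewrite ger0_norm.
set y := Num.sqrt z.
have y0 : 0 <= y by exact: sqrtr_ge0.
have y1 : y < 1 by rewrite /y -sqrtr1 ltr_sqrt.
have yz : y ^+ 2 = z by rewrite /y sqr_sqrtr.
apply: (@series_le_cvg _ _ ((1 - y)^-1 *: (fun m : nat => m%:R ^+ i * y ^+ m))).
- by move=> m; rewrite mulr_ge0 ?exprn_ge0.
- move=> m; rewrite /= mulr_ge0 ?mulr_ge0 ?exprn_ge0 // invr_ge0 subr_ge0 ltW //.
- move=> m /=; rewrite -yz -exprM mulnC exprM expr2 exprS.
  have := @my_bound2 y m; rewrite y0 y1 => /(_ isT) H.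
  have h0 : 0 <= m%:R ^+ i * y ^+ m by rewrite mulr_ge0 ?exprn_ge0.
  have -> : m%:R * m%:R ^+ i * (y ^+ m * y ^+ m) = (m%:R * y ^+ m) * (m%:R ^+ i * y ^+ m)
    by ring.
  exact: (ler_wpM2r h0 H).
- by apply: is_cvg_seriesZ; apply: IH; rewrite y0.
Qed.
End An.

Section Seq.
Variables (R : realType) (p : R) (k : nat) (a u : nat -> R).
Hypotheses (hp0 : 0 < p) (hp1 : p < 1) (hk : (0 < k)%N).
Hypotheses (u0 : u 0 = 1) (uS : forall n, u n = u n.+1 + a n.+1)
  (alt : forall n, (n < k)%N -> a n = 0) (ak : a k = p ^+ k)
  (atail : forall m, a (m + k)%N.+1 = (1 - p) * p ^+ k * u m)
  (uge0 : forall n, 0 <= u n).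

Let c : R := (1 - p) * p ^+ k.

Lemma c_gt0 : 0 < c.
Proof. by rewrite /c mulr_gt0 ?subr_gt0 ?exprn_gt0. Qed.

Lemma c_lt1 : c < 1.
Proof.
have h : p ^+ k <= 1 by rewrite exprn_ile1 ?ltW.
have h2 : 0 <= p ^+ k by rewrite exprn_ge0 ?ltW.
have h3 : 0 <= (1 - p) * (1 - p ^+ k) by apply: mulr_ge0; rewrite subr_ge0 // ltW.
have h0 := hp0; rewrite /c; nra.
Qed.

Lemma a_ge0 n : 0 <= a n.
Proof.
case: (ltngtP n k) => [h|h|->]; first by rewrite alt.
  have -> : n = ((n - k.+1) + k)%N.+1 by lia.
  by rewrite atail mulr_ge0 // mulr_ge0 ?subr_ge0 ?exprn_ge0 ?ltW.
by rewrite ak exprn_ge0 ?ltW.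
Qed.

Lemma u_le n : u n.+1 <= u n.
Proof. by rewrite [X in _ <= X]uS lerDl a_ge0. Qed.

Lemma u_mono m n : (m <= n)%N -> u n <= u m.
Proof.
elim: n => [|n IH]; first by rewrite leqn0 => /eqP ->.
rewrite leq_eqVlt => /orP [/eqP -> //|]; rewrite ltnS => /IH.
exact: le_trans (u_le n).
Qed.

Lemma u_decay m : u (m + k)%N.+1 <= (1 - c) * u (m + k)%N.
Proof.
have e := uS (m + k)%N; rewrite atail -/c in e.
have h : c * u (m + k)%N <= c * u m.
  by apply: ler_wpM2l; [exact: ltW c_gt0 | apply: u_mono; exact: leq_addr].
lra.
Qed.

Let rho : R := 1 - c.

Lemma rho_gt0 : 0 < rho. Proof. by rewrite /rho subr_gt0 c_lt1. Qed.
Lemma rho_lt1 : rho < 1. Proof. by rewrite /rho ltrBlDl ltrDr c_gt0. Qed.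

Lemma u_bound n : u n * rho ^+ k <= rho ^+ n.
Proof.
have r0 := ltW rho_gt0; have r1 := ltW rho_lt1.
elim: n => [|n IH]; first by rewrite u0 mul1r exprn_ile1.
case: (ltnP n k) => h.
  have hu : u n.+1 <= 1 by rewrite -u0 u_mono.
  have hr : rho ^+ k <= rho ^+ n.+1 by rewrite ler_wiXn2l.
  have hr0 : 0 <= rho ^+ k by rewrite exprn_ge0.
  nra.
have -> : n = (n - k + k)%N by rewrite subnK.
have hd := u_decay (n - k).
have hr0 : 0 <= rho ^+ k by rewrite exprn_ge0.
rewrite -(subnK h) in IH.
rewrite exprS; apply: le_trans (ler_wpM2l r0 IH); rewrite mulrA.
by apply: ler_wpM2r.
Qed.

Lemma cvg_U i : cvgn (series (fun m : nat => m%:R ^+ i * u m)).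
Proof.
have r0 := rho_gt0; have r1 := rho_lt1.
have rk : 0 < rho ^+ k by rewrite exprn_gt0.
apply: (@series_le_cvg _ _ ((rho ^+ k)^-1 *: (fun m : nat => m%:R ^+ i * rho ^+ m))).
- by move=> m; rewrite mulr_ge0 ?exprn_ge0.
- have r0w := ltW r0; have rkw := ltW rk.
  by move=> m; rewrite /= mulr_ge0 ?mulr_ge0 ?exprn_ge0 ?invr_ge0 ?ler0n.
- move=> m /=.
  have h : u m <= (rho ^+ k)^-1 * rho ^+ m.
    by rewrite mulrC ler_pdivlMr // u_bound.
  have h0 : 0 <= m%:R ^+ i :> R by rewrite exprn_ge0.
  suff -> : (rho ^- k *: (fun m0 : nat => m0%:R ^+ i * rho ^+ m0)) m = m%:R ^+ i * (rho ^- k * rho ^+ m) by exact: ler_wpM2l.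
  by rewrite /= mulrCA.
- by apply: is_cvg_seriesZ; apply: series_poly_geom; rewrite ltW.
Qed.

Lemma tail0 i : (fun m : nat => m%:R ^+ i * u m) @ \oo --> 0.
Proof. exact: cvg_series_cvg_0 (cvg_U i). Qed.


Lemma abel (f : nat -> R) N :
  \sum_(0 <= n < N.+1) f n * a n =
  \sum_(0 <= m < N) (f m.+1 - f m) * u m + f 0%N * u 0%N - f N * u N.
Proof.
elim: N => [|N IH].
  by rewrite big_nat1 big_geq // alt // mulr0 add0r subrr.
rewrite big_nat_recr //= IH big_nat_recr //=.
have ha : a N.+1 = u N - u N.+1 by have := uS N; lra.
rewrite ha; ring.
Qed.

Lemma tailsum (g : nat -> R) N :
  \sum_(0 <= n < (N + k)%N.+1) g n * a n =
  p ^+ k * g k + c * \sum_(0 <= m < N) g (m + k)%N.+1 * u m.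
Proof.
elim: N => [|N IH].
  rewrite add0n big_nat_recr //= [X in c * X]big_geq // mulr0 addr0 ak.
  rewrite big_nat big1 ?add0r 1?mulrC // => n /andP [_ hn].
  by rewrite alt // mulr0.
rewrite addSn big_nat_recr //= IH big_nat_recr //= atail -/c; ring.
Qed.

Let U i := limn (series (fun m : nat => m%:R ^+ i * u m)).

Lemma cvg_Ui i : series (fun m : nat => m%:R ^+ i * u m) @ \oo --> U i.
Proof. exact: cvg_U. Qed.

Lemma lim_cubic (h : nat -> R) d0 d1 d2 d3 :
  (forall m : nat, h m = d0 + d1 * m%:R + d2 * m%:R ^+ 2 + d3 * m%:R ^+ 3) ->
  (fun N => \sum_(0 <= m < N) h m * u m) @ \oo -->
    d0 * U 0 + d1 * U 1 + d2 * U 2 + d3 * U 3.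
Proof.
move=> hh.
have -> : (fun N => \sum_(0 <= m < N) h m * u m) =
  (fun N => d0 * series (fun m : nat => m%:R ^+ 0 * u m) N
          + d1 * series (fun m : nat => m%:R ^+ 1 * u m) N
          + d2 * series (fun m : nat => m%:R ^+ 2 * u m) N
          + d3 * series (fun m : nat => m%:R ^+ 3 * u m) N).
  apply/funext => N; rewrite /series /= !mulr_sumr -!big_split /=.
  by apply: eq_bigr => m _; rewrite hh; ring.
apply: cvgD; [apply: cvgD; [apply: cvgD|]|]; apply: cvgM; (exact: cvg_cst || exact: cvg_Ui).
Qed.

Lemma tail_quartic d0 d1 d2 d3 d4 :
  (fun N : nat => (d0 + d1 * N%:R + d2 * N%:R ^+ 2 + d3 * N%:R ^+ 3 + d4 * N%:R ^+ 4) * u N)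
    @ \oo --> 0.
Proof.
have -> : (fun N : nat => (d0 + d1 * N%:R + d2 * N%:R ^+ 2 + d3 * N%:R ^+ 3 + d4 * N%:R ^+ 4) * u N)
  = (fun N : nat => d0 * (N%:R ^+ 0 * u N) + d1 * (N%:R ^+ 1 * u N) + d2 * (N%:R ^+ 2 * u N)
       + d3 * (N%:R ^+ 3 * u N) + d4 * (N%:R ^+ 4 * u N)).
  by apply/funext => N; ring.
have -> : (0 : R) = d0 * 0 + d1 * 0 + d2 * 0 + d3 * 0 + d4 * 0 by ring.
apply: cvgD; [apply: cvgD; [apply: cvgD; [apply: cvgD|]|]|]; apply: cvgM;
  (exact: cvg_cst || exact: tail0).
Qed.


Lemma tail_cubic d0 d1 d2 d3 :
  (fun N : nat => (d0 + d1 * N%:R + d2 * N%:R ^+ 2 + d3 * N%:R ^+ 3) * u N) @ \oo --> 0.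
Proof.
suff -> : (fun N : nat => (d0 + d1 * N%:R + d2 * N%:R ^+ 2 + d3 * N%:R ^+ 3) * u N) =
  (fun N : nat => (d0 + d1 * N%:R + d2 * N%:R ^+ 2 + d3 * N%:R ^+ 3 + 0 * N%:R ^+ 4) * u N)
  by exact: tail_quartic.
by apply/funext => N; ring.
Qed.

Lemma cvg_eq (f g : nat -> R) (l1 l2 : R) :
  (forall n, f n = g n) -> f @ \oo --> l1 -> g @ \oo --> l2 -> l1 = l2.
Proof.
move=> fg h1 h2; have e : f = g by apply/funext.
rewrite e in h1; exact: (cvg_unique _ h1 h2).
Qed.

Lemma key (e0 e1 e2 e3 : R) :
  let K := (k%:R : R) in let L := K + 1 in
  (e1 + e2 + e3) * U 0 + (2 * e2 + 3 * e3) * U 1 + 3 * e3 * U 2 + 0 * U 3 + e0 * 1 - 0 =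
  p ^+ k * (e0 + e1 * K + e2 * K ^+ 2 + e3 * K ^+ 3)
  + c * ((e0 + e1 * L + e2 * L ^+ 2 + e3 * L ^+ 3) * U 0
         + (e1 + 2 * e2 * L + 3 * e3 * L ^+ 2) * U 1
         + (e2 + 3 * e3 * L) * U 2 + e3 * U 3).
Proof.
move=> K L.
pose g := fun n : nat => e0 + e1 * n%:R + e2 * n%:R ^+ 2 + e3 * n%:R ^+ 3.
apply: (@cvg_eq
  (fun N => \sum_(0 <= m < (N + k)%N) (g m.+1 - g m) * u m + g 0%N * u 0%N
            - g (N + k)%N * u (N + k)%N)
  (fun N => p ^+ k * g k + c * \sum_(0 <= m < N) g (m + k)%N.+1 * u m)).
- by move=> N; rewrite -abel tailsum.
- rewrite (cvg_shiftn k (fun M => \sum_(0 <= m < M) (g m.+1 - g m) * u m + g 0%N * u 0%N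
            - g M * u M)).
  apply: cvgB; first apply: cvgD.
  + apply: (@lim_cubic (fun m => g m.+1 - g m)) => m.
    by rewrite /g -natr1; ring.
  + rewrite (_ : g 0%N * u 0%N = e0 * 1); first exact: cvg_cst.
    by rewrite /g u0 expr0n /=; ring.
  + rewrite /g; exact: (@tail_cubic e0 e1 e2 e3).
- apply: cvgD; first exact: cvg_cst.
  apply: cvgM; first exact: cvg_cst.
  apply: (@lim_cubic (fun m => g (m + k)%N.+1)) => m.
  by rewrite /g -natr1 natrD /L /K; ring.
Qed.


Lemma mom (f : nat -> R) d0 d1 d2 d3 :
  f 0%N = 0 ->
  (forall m : nat, f m.+1 - f m = d0 + d1 * m%:R + d2 * m%:R ^+ 2 + d3 * m%:R ^+ 3) ->
  (fun N : nat => f N * u N) @ \oo --> 0 ->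
  (fun N => \sum_(0 <= n < N) f n * a n) @ \oo --> d0 * U 0 + d1 * U 1 + d2 * U 2 + d3 * U 3.
Proof.
move=> f0 df ft.
rewrite -(cvg_shiftn 1).
have -> : (fun n : nat => \sum_(0 <= i < (n + 1)%N) f i * a i) =
  (fun N => \sum_(0 <= m < N) (f m.+1 - f m) * u m + f 0%N * u 0%N - f N * u N).
  by apply/funext => N; rewrite addn1 abel.
have -> : d0 * U 0 + d1 * U 1 + d2 * U 2 + d3 * U 3 =
  (d0 * U 0 + d1 * U 1 + d2 * U 2 + d3 * U 3) + f 0%N * u 0%N - 0.
  by rewrite f0 mul0r addr0 subr0.
apply: cvgB; [apply: cvgD; [exact: lim_cubic | exact: cvg_cst] | exact: ft].
Qed.

Lemma cne0 : c != 0. Proof. by rewrite gt_eqF // c_gt0. Qed.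

Lemma final :
  let q := 1 - p in let P := p ^+ k in let K := (k%:R : R) in
  [/\ (fun N => \sum_(0 <= n < N) (n%:R) ^+ 1 * a n) @ \oo --> (1 - P) / (q * P),
      (fun N => \sum_(0 <= n < N) (n%:R) ^+ 2 * a n) @ \oo -->
        (2 * (1 - P) / (q ^+ 2 * P ^+ 2) - (2 * K + 1 - P) / (q * P)),
      (fun N => \sum_(0 <= n < N) (n%:R) ^+ 3 * a n) @ \oo -->
        (6 * (1 - P) / (q ^+ 3 * P ^+ 3)
         - (12 * K + 6 - (6 * K + 6) * P) / (q ^+ 2 * P ^+ 2)
         + (3 * K ^+ 2 + 3 * K + 1 - P) / (q * P)) &
      (fun N => \sum_(0 <= n < N) (n%:R) ^+ 4 * a n) @ \oo -->
        (24 * (1 - P) / (q ^+ 4 * P ^+ 4)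
         - (72 * K + 36 - (48 * K + 36) * P) / (q ^+ 3 * P ^+ 3)
         + (48 * K ^+ 2 + 48 * K + 14 - (12 * K ^+ 2 + 24 * K + 14) * P)
             / (q ^+ 2 * P ^+ 2)
         - (4 * K ^+ 3 + 6 * K ^+ 2 + 4 * K + 1 - P) / (q * P))].
Proof.
move=> q P K.
have M1 := @mom (fun n => n%:R ^+ 1) 1 0 0 0.
have M2 := @mom (fun n => n%:R ^+ 2) 1 2 0 0.
have M3 := @mom (fun n => n%:R ^+ 3) 1 3 3 0.
have M4 := @mom (fun n => n%:R ^+ 4) 1 4 6 4.
have z : forall j, (0 < j)%N -> (0%N)%:R ^+ j = 0 :> R.
  by move=> j hj; rewrite mulr0n expr0n eqn0Ngt hj.
move: (M1 (z 1%N isT)) (M2 (z 2%N isT)) (M3 (z 3%N isT)) (M4 (z 4%N isT)).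
move=> {M1 M2 M3 M4} M1 M2 M3 M4.
have {M1}M1 := M1 (fun m => ltac:(rewrite -natr1; ring)) (tail0 1).
have {M2}M2 := M2 (fun m => ltac:(rewrite -natr1; ring)) (tail0 2).
have {M3}M3 := M3 (fun m => ltac:(rewrite -natr1; ring)) (tail0 3).
have {M4}M4 := M4 (fun m => ltac:(rewrite -natr1; ring)) (tail0 4).
have E0 := key 1 0 0 0; have E1 := key 0 1 0 0.
have E2 := key 0 0 1 0; have E3 := key 0 0 0 1.
rewrite /= -/K -/P in E0 E1 E2 E3.
have cE : c = q * P by [].
have qn0 : q != 0 by rewrite /q subr_eq0 gt_eqF.
have Pn0 : P != 0 by rewrite /P expf_neq0 // gt_eqF.
have cn0 := cne0.
move: M1 M2 M3 M4 E0 E1 E2 E3 cE cn0; set U0 := U 0; set U1 := U 1; set U2 := U 2; set U3 := U 3.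
clearbody U0 U1 U2 U3.
move=> M1 M2 M3 M4 E0 E1 E2 E3 cE cn0.
have h0 : c * U0 = 1 - P by lra.
have h1 : c * U1 = U0 - P * K - c * (K + 1) * U0 by lra.
have h2 : c * U2 = U0 + 2 * U1 - P * K ^+ 2 - c * ((K + 1) ^+ 2 * U0 + 2 * (K + 1) * U1) by lra.
have h3 : c * U3 = U0 + 3 * U1 + 3 * U2 - P * K ^+ 3
   - c * ((K + 1) ^+ 3 * U0 + 3 * (K + 1) ^+ 2 * U1 + 3 * (K + 1) * U2) by lra.
have g0 : U0 = (1 - P) / c by rewrite -h0 mulrC mulKf.
have g1 : U1 = (U0 - P * K - c * (K + 1) * U0) / c by rewrite -h1 mulrC mulKf.
have g2 : U2 = (U0 + 2 * U1 - P * K ^+ 2 - c * ((K + 1) ^+ 2 * U0 + 2 * (K + 1) * U1)) / c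
  by rewrite -h2 mulrC mulKf.
have g3 : U3 = (U0 + 3 * U1 + 3 * U2 - P * K ^+ 3
   - c * ((K + 1) ^+ 3 * U0 + 3 * (K + 1) ^+ 2 * U1 + 3 * (K + 1) * U2)) / c
  by rewrite -h3 mulrC mulKf.
clear h0 h1 h2 h3 E0 E1 E2 E3.
split.
- suff -> : (1 - P) / (q * P) = 1 * U0 + 0 * U1 + 0 * U2 + 0 * U3 by [].
  by rewrite g0 cE; field; rewrite qn0 Pn0.
- suff -> : 2 * (1 - P) / (q ^+ 2 * P ^+ 2) - (2 * K + 1 - P) / (q * P)
    = 1 * U0 + 2 * U1 + 0 * U2 + 0 * U3 by [].
  by rewrite g1 g0 cE; field; rewrite qn0 Pn0.
- suff -> : 6 * (1 - P) / (q ^+ 3 * P ^+ 3)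
         - (12 * K + 6 - (6 * K + 6) * P) / (q ^+ 2 * P ^+ 2)
         + (3 * K ^+ 2 + 3 * K + 1 - P) / (q * P)
    = 1 * U0 + 3 * U1 + 3 * U2 + 0 * U3 by [].
  by rewrite g2 g1 g0 cE; field; rewrite qn0 Pn0.
- suff -> : 24 * (1 - P) / (q ^+ 4 * P ^+ 4)
         - (72 * K + 36 - (48 * K + 36) * P) / (q ^+ 3 * P ^+ 3)
         + (48 * K ^+ 2 + 48 * K + 14 - (12 * K ^+ 2 + 24 * K + 14) * P)
             / (q ^+ 2 * P ^+ 2)
         - (4 * K ^+ 3 + 6 * K ^+ 2 + 4 * K + 1 - P) / (q * P)
    = 1 * U0 + 4 * U1 + 6 * U2 + 4 * U3 by [].
  by rewrite g3 g2 g1 g0 cE; field; rewrite qn0 Pn0.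
Qed.

End Seq.

Lemma geom (R : realType) (p : R) k : 0 < p -> p < 1 ->
  \sum_(1 <= i < k.+1) p ^- i = (1 - p ^+ k) / ((1 - p) * p ^+ k).
Proof.
move=> hp0 hp1.
have pn0 : p != 0 by rewrite gt_eqF.
have qn0 : 1 - p != 0 by rewrite subr_eq0 eq_sym lt_eqF.
elim: k => [|k IH]; first by rewrite big_geq // expr0 subrr mul0r.
rewrite big_nat_recr //= IH exprS; field.
by rewrite qn0 pn0 expf_neq0.
Qed.

Local Close Scope classical_set_scope.

Theorem corollary3p2 (R : realType) (p : R) (k : nat)
  (hp0 : 0 < p) (hp1 : p < 1) (hk : (1 <= k)%N) :
  let q := 1 - p in
  let P := p ^+ k in
  let K := (k%:R : R) in
  [/\ moment_is p k 1 (\sum_(1 <= i < k.+1) p ^- i)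
         /\ \sum_(1 <= i < k.+1) p ^- i = (1 - P) / (q * P),
      moment_is p k 2
        (2 * (1 - P) / (q ^+ 2 * P ^+ 2) - (2 * K + 1 - P) / (q * P)),
      moment_is p k 3
        (6 * (1 - P) / (q ^+ 3 * P ^+ 3)
         - (12 * K + 6 - (6 * K + 6) * P) / (q ^+ 2 * P ^+ 2)
         + (3 * K ^+ 2 + 3 * K + 1 - P) / (q * P)) &
      moment_is p k 4
        (24 * (1 - P) / (q ^+ 4 * P ^+ 4)
         - (72 * K + 36 - (48 * K + 36) * P) / (q ^+ 3 * P ^+ 3)
         + (48 * K ^+ 2 + 48 * K + 14 - (12 * K ^+ 2 + 24 * K + 14) * P)
             / (q ^+ 2 * P ^+ 2)
         - (4 * K ^+ 3 + 6 * K ^+ 2 + 4 * K + 1 - P) / (q * P))].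
Proof.
move=> q P K.
have [F1 F2 F3 F4] := @final R p k (probY p k) (uu R p k) hp0 hp1 hk
  (@uu0 R p k hk) (@uuS R p k) (@probY_lt R p k) (@probY_k R p k)
  (@probY_tail R p k hk) (@uu_ge0 R p k hp0 hp1).
split => //.
by rewrite /moment_is geom.
Qed.
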